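(* Let $K$ be an arbitrary field and $A$ a finite-dimensional $K$-algebra of finite global dimension. Let $(P_i)_{i\in I}$ and $(S_i)_{i\in I}$ be representatives of the isomorphism classes of indecomposable projective and simple $A$-modules respectively, indexed so that $S_i$ is a quotient of $P_i$, and let $d_i = \dim_K \operatorname{End}_A(S_i)$. Let $Z_A=(Z_{ij})$ with $Z_{ij} = \dim_K \operatorname{Hom}_A(P_i,P_j)$. Then $Z_A$ is invertible over $\mathbb{Q}$, and writing $Z_A^{-1} = (\overline{Z}_{ij})$, \[ \overline{Z}_{ij} = d_i^{-1}\, \chi_A(S_j,S_i)\, d_j^{-1} \quad (i,j\in I). \] Consequently the magnitude of $\mathrm{IP}(A)$ is defined and \[ |\mathrm{IP}(A)| = \sum_{i,j\in I} d_i^{-1} d_j^{-1}\, \chi_A(S_j,S_i) . \]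
   Context: Modules are finitely generated left $A$-modules. The Euler form is $\chi_A(X,Y) = \sum_{n\ge 0} (-1)^n \dim_K \operatorname{Ext}^n_A(X,Y)$ for finite-dimensional modules $X,Y$ (a finite sum by finite global dimension). $\mathrm{IP}(A)$ is the $K$-linear category of indecomposable projective $A$-modules and all homomorphisms, equivalent to its full subcategory on the $P_i$. The magnitude $|\mathrm{IP}(A)|$ is defined (when $Z_A$ is invertible) as the sum of all entries of $Z_A^{-1}$. *)

(* Defs.v *)
From HB Require Import structures.
From mathcomp Require Import all_boot all_order all_algebra.
From mathcomp Require Import falgebra.
Set Implicit Arguments. Unset Strict Implicit. Unset Printing Implicit Defensive.
Import GRing.Theory.
Local Open Scope ring_scope.

Section FDModules.
Variables (K : fieldType) (A : falgType K).

(* A finite-dimensional left A-module: K^mdim (row vectors), with a . v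
   given by  v *m mact a ; hence mact (a * b) = mact b *m mact a. *)
Record fdmod := FDMod {
  mdim : nat;
  mact : A -> 'M[K]_mdim;
  mact_lin : forall (k : K) (a b : A), mact (k *: a + b) = k *: mact a + mact b;
  mact1 : mact 1 = 1%:M;
  mactM : forall a b : A, mact (a * b) = mact b *m mact a }.

Definition is_hom (X Y : fdmod) (f : 'M[K]_(mdim X, mdim Y)) : Prop :=
  forall a : A, mact X a *m f = f *m mact Y a.

(* Hom_A(X,Y) as a K-subspace of 'M_(mdim X, mdim Y) (vectorized by mxvec):
   commuting with the action of every element of a K-basis of A. *)
Definition homspace (X Y : fdmod) : 'M[K]_(mdim X * mdim Y) :=
  (\bigcap_(i < \dim (fullv : {vspace A}))
     kermx (lin_mx (fun f : 'M[K]_(mdim X, mdim Y) =>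
        mact X (tnth (vbasis fullv) i) *m f - f *m mact Y (tnth (vbasis fullv) i))))%MS.

Definition dimHom (X Y : fdmod) : nat := \rank (homspace X Y).

Definition isomorphic (X Y : fdmod) : Prop :=
  exists (f : 'M[K]_(mdim X, mdim Y)) (g : 'M[K]_(mdim Y, mdim X)),
    [/\ is_hom f, is_hom g, f *m g = 1%:M & g *m f = 1%:M].

Definition is_submod (X : fdmod) (U : 'M[K]_(mdim X)) : Prop :=
  forall a : A, (U *m mact X a <= U)%MS.

Definition simple_mod (X : fdmod) : Prop :=
  (0 < mdim X)%N /\
  forall U : 'M[K]_(mdim X), is_submod U -> U = 0 \/ row_full U.

Definition indecomposable (X : fdmod) : Prop :=
  (0 < mdim X)%N /\
  forall U V : 'M[K]_(mdim X), is_submod U -> is_submod V ->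
    row_full (U + V)%MS -> (U :&: V)%MS = 0 -> U = 0 \/ V = 0.

Definition is_epi (X Y : fdmod) (f : 'M[K]_(mdim X, mdim Y)) : Prop :=
  is_hom f /\ \rank f = mdim Y.

Definition projective (P : fdmod) : Prop :=
  forall (X Y : fdmod) (g : 'M[K]_(mdim X, mdim Y)) (f : 'M[K]_(mdim P, mdim Y)),
    is_epi g -> is_hom f -> exists h : 'M[K]_(mdim P, mdim X), is_hom h /\ h *m g = f.

(* A finite projective resolution
     0 <- X <-reps- P_0 <-rd 0- P_1 <-rd 1- P_2 <- ...,  with P_n = 0 for n > rlen *)
Record projres (X : fdmod) := ProjRes {
  rlen : nat;
  rmod : nat -> fdmod;
  rd : forall n, 'M[K]_(mdim (rmod n.+1), mdim (rmod n));
  reps : 'M[K]_(mdim (rmod 0), mdim X);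
  rproj : forall n, projective (rmod n);
  rd_hom : forall n, is_hom (rd n);
  reps_epi : is_epi reps;
  rexact0 : (kermx reps == rd 0)%MS;
  rexact : forall n, (kermx (rd n) == rd n.+1)%MS;
  rbound : forall n, (rlen < n)%N -> mdim (rmod n) = 0%N }.

(* Ext^n_A(X,Y) is the n-th cohomology of Hom_A(P_., Y) with differentials
   delta_n : Hom(P_n,Y) -> Hom(P_{n+1},Y), f |-> rd n *m f. *)
Definition ext_ker_rank (X Y : fdmod) (R : projres X) (n : nat) : nat :=
  \rank (homspace (rmod R n) Y
           :&: kermx (lin_mx (mulmx (rd R n) : 'M[K]_(mdim (rmod R n), mdim Y) -> _)))%MS.

Definition ext_im_rank (X Y : fdmod) (R : projres X) (n : nat) : nat :=
  \rank (homspace (rmod R n) Y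
           *m lin_mx (mulmx (rd R n) : 'M[K]_(mdim (rmod R n), mdim Y) -> _)).

Definition dimExt (X Y : fdmod) (R : projres X) (n : nat) : nat :=
  (ext_ker_rank Y R n - (if n is n'.+1 then ext_im_rank Y R n' else 0))%N.

(* Euler form chi_A(X,Y) = sum_n (-1)^n dim Ext^n(X,Y); Ext^n = 0 for n > rlen *)
Definition euler (X Y : fdmod) (R : projres X) : rat :=
  \sum_(n < (rlen R).+1) (-1) ^+ n * (dimExt Y R n)%:R.

Definition fin_gldim : Prop :=
  exists N : nat, forall X : fdmod, exists R : projres X, (rlen R <= N)%N.

End FDModules.

Definition magnitude (n : nat) (Z : 'M[rat]_n) : rat :=
  \sum_(i < n) \sum_(j < n) invmx Z i j.

(* Main.v *)
Require Import Defs.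
From HB Require Import structures.
From mathcomp Require Import all_boot all_order all_algebra.
From mathcomp Require Import falgebra.
From Stdlib Require Import Classical.
From mathcomp Require Import zify ring.
Set Implicit Arguments. Unset Strict Implicit. Unset Printing Implicit Defensive.
Import GRing.Theory Num.Theory.
Local Open Scope ring_scope.

Section Mod.
Variables (K : fieldType) (A : falgType K).
Implicit Types P X Y Z Q : fdmod A.

Lemma mact_linear X : linear (@mact _ _ X).
Proof. by move=> k a b; rewrite mact_lin. Qed.
HB.instance Definition _ X := GRing.isLinear.Build K A 'M[K]_(mdim X) _ (@mact _ _ X) (@mact_linear X).

Definition homfun X Y (a : A) (f : 'M[K]_(mdim X, mdim Y)) := mact X a *m f - f *m mact Y a.
Lemma homfun_linear X Y a : linear (@homfun X Y a).
Proof. move=> k f g; rewrite /homfun mulmxDr mulmxDl -!scalemxAr -!scalemxAl; rewrite scalerBr; rewrite addrACA opprD //. Qed.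
HB.instance Definition _ X Y a := GRing.isLinear.Build K _ _ _ (@homfun X Y a) (@homfun_linear X Y a).

Lemma hom_spec X Y (f : 'M[K]_(mdim X, mdim Y)) : (mxvec f <= homspace X Y)%MS <-> @is_hom _ _ X Y f.
Proof.
rewrite /homspace; split.
  move/sub_bigcapmxP => H a.
  have Hb : forall i, @homfun X Y (tnth (vbasis fullv) i) f = 0.
    move=> i; move: (H i isT); rewrite sub_kermx.
    have -> : lin_mx (fun f0 : 'M_(mdim X, mdim Y) => mact X (tnth (vbasis fullv) i) *m f0 - f0 *m mact Y (tnth (vbasis fullv) i)) = lin_mx (@homfun X Y (tnth (vbasis fullv) i)) by [].
    by rewrite mul_vec_lin /= => /eqP /(canRL mxvecK); rewrite linear0.
  have ha : a \in (fullv : {vspace A}) by rewrite memvf.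
  rewrite (coord_vbasis ha) !linear_sum /= mulmx_suml.
  apply: eq_bigr => i _; rewrite !linearZ /= -?scalemxAl; congr (_ *: _).
  apply/eqP; rewrite -subr_eq0; move: (Hb i); by rewrite /homfun (tnth_nth 0) => ->.
move=> H; apply/sub_bigcapmxP => i _.
rewrite sub_kermx.
have -> : lin_mx (fun f0 : 'M_(mdim X, mdim Y) => mact X (tnth (vbasis fullv) i) *m f0 - f0 *m mact Y (tnth (vbasis fullv) i)) = lin_mx (@homfun X Y (tnth (vbasis fullv) i)) by [].
by rewrite mul_vec_lin /= /homfun H subrr linear0.
Qed.

Lemma hom_specV X Y (v : 'rV[K]_(mdim X * mdim Y)) :
  (v <= homspace X Y)%MS <-> @is_hom _ _ X Y (vec_mx v).
Proof. by rewrite -hom_spec vec_mxK. Qed.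

Lemma is_homM X Y Z (f : 'M[K]_(mdim X, mdim Y)) (g : 'M[K]_(mdim Y, mdim Z)) :
  is_hom f -> is_hom g -> is_hom (f *m g).
Proof. by move=> hf hg a; rewrite mulmxA hf -mulmxA hg mulmxA. Qed.

Lemma is_homD X Y (f g : 'M[K]_(mdim X, mdim Y)) : is_hom f -> is_hom g -> is_hom (f + g).
Proof. by move=> hf hg a; rewrite mulmxDr mulmxDl hf hg. Qed.

Lemma is_hom0 X Y : @is_hom _ _ X Y 0.
Proof. by move=> a; rewrite mulmx0 mul0mx. Qed.

Lemma is_hom1 X : @is_hom _ _ X X 1%:M.
Proof. by move=> a; rewrite mulmx1 mul1mx. Qed.

Lemma rank_inj a b p1 p2 (H1 : 'M[K]_(p1, a)) (H2 : 'M[K]_(p2, b)) (T : 'M[K]_(a, b)) :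
  (forall v : 'rV_a, (v <= H1)%MS -> (v *m T <= H2)%MS) ->
  (forall v : 'rV_a, (v <= H1)%MS -> v *m T = 0 -> v = 0) -> (\rank H1 <= \rank H2)%N.
Proof.
move=> hS hI.
have <- : \rank (H1 *m T) = \rank H1.
  apply/mxrank_injP/rowV0P => v; rewrite sub_capmx => /andP[v1 v2].
  by apply: hI => //; apply/sub_kermxP.
apply: mxrankS; apply/row_subP => i; rewrite row_mul; apply: hS; exact: row_sub.
Qed.

Definition sub_act X (U : 'M[K]_(mdim X)) (a : A) : 'M[K]_(\rank U) :=
  row_base U *m mact X a *m pinvmx (row_base U).

Lemma sub_act_lin X (U : 'M[K]_(mdim X)) k a b :
  sub_act U (k *: a + b) = k *: sub_act U a + sub_act U b.
Proof. by rewrite /sub_act mact_lin mulmxDr -scalemxAr !mulmxDl -!scalemxAl. Qed.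

Lemma sub_act1 X (U : 'M[K]_(mdim X)) : sub_act U 1 = 1%:M.
Proof. by rewrite /sub_act mact1 mulmx1 mulmxVp ?row_base_free. Qed.

Lemma row_base_stable X (U : 'M[K]_(mdim X)) (hU : is_submod U) a :
  (row_base U *m mact X a <= row_base U)%MS.
Proof.
have sB : (row_base U <= U)%MS by rewrite eq_row_base.
by rewrite eq_row_base; exact: submx_trans (submxMr _ sB) (hU a).
Qed.

Lemma sub_actM X (U : 'M[K]_(mdim X)) (hU : is_submod U) a b :
  sub_act U (a * b) = sub_act U b *m sub_act U a.
Proof.
rewrite /sub_act mactM.
have e : row_base U *m mact X b *m pinvmx (row_base U) *m row_base U = row_base U *m mact X b.
  by rewrite mulmxKpV // row_base_stable.
move: e; move: (pinvmx (row_base U)) => pB; move: (row_base U) => B e.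
by rewrite !mulmxA e.
Qed.

Definition submod X (U : 'M[K]_(mdim X)) (hU : is_submod U) : fdmod A :=
  @FDMod K A (\rank U) (sub_act U) (@sub_act_lin X U) (sub_act1 U) (sub_actM hU).

Lemma hom_incl X (U : 'M[K]_(mdim X)) (hU : is_submod U) :
  @is_hom _ _ (submod hU) X (row_base U).
Proof.
move=> a; rewrite /= /sub_act.
have e := mulmxKpV (row_base_stable hU a).
move: e; move: (pinvmx (row_base U)) => pB; move: (row_base U) => B e.
by rewrite e.
Qed.

Lemma hom_into X Y (U : 'M[K]_(mdim Y)) (hU : is_submod U) (f : 'M[K]_(mdim X, mdim Y)) :
  is_hom f -> (f <= U)%MS -> @is_hom _ _ X (submod hU) (f *m pinvmx (row_base U)).
Proof.
move=> hf sf a; rewrite /= /sub_act.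
have e : f *m pinvmx (row_base U) *m row_base U = f by rewrite mulmxKpV ?eq_row_base.
move: e; move: (pinvmx (row_base U)) => pB; move: (row_base U) => B e.
by rewrite !mulmxA e hf.
Qed.

Lemma lift_img P X Y (hP : projective P) (g : 'M[K]_(mdim X, mdim Y))
    (f : 'M[K]_(mdim P, mdim Y)) :
  is_hom g -> is_hom f -> (f <= g)%MS ->
  exists h : 'M[K]_(mdim P, mdim X), is_hom h /\ h *m g = f.
Proof.
move=> hg hf sfg.
have hU : is_submod (<<g>>%MS : 'M[K]_(mdim Y)).
  by move=> a; rewrite (eqmxMr _ (genmxE g)) genmxE -hg submxMl.
have sgU : (g <= <<g>>)%MS by rewrite genmxE.
have sfU : (f <= <<g>>)%MS by rewrite genmxE.
have hg' := hom_into hU hg sgU.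
have hf' := hom_into hU hf sfU.
have eg : g *m pinvmx (row_base <<g>>%MS) *m row_base <<g>>%MS = g by rewrite mulmxKpV ?eq_row_base.
have ef : f *m pinvmx (row_base <<g>>%MS) *m row_base <<g>>%MS = f by rewrite mulmxKpV ?eq_row_base.
have epi : is_epi (g *m pinvmx (row_base <<g>>%MS) : 'M_(mdim X, mdim (submod hU))).
  split => //=; apply/eqP; rewrite eqn_leq rank_leq_col /=.
  by apply: (leq_trans _ (mxrankM_maxl _ (row_base <<g>>%MS))); rewrite eg mxrank_gen.
have [h [hh hhg]] := hP _ _ _ _ epi hf'.
exists h; split => //.
by rewrite -ef -hhg -mulmxA eg.
Qed.

Lemma vecmul_r m n p (v : 'rV[K]_(m * n)) (f : 'M[K]_(n, p)) :
  v *m lin_mx (mulmxr f) = mxvec (vec_mx v *m f).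
Proof. by rewrite mul_rV_lin. Qed.

Lemma vecmul_l m n p (v : 'rV[K]_(n * p)) (f : 'M[K]_(m, n)) :
  v *m lin_mx (mulmx f) = mxvec (f *m vec_mx v).
Proof. by rewrite mul_rV_lin. Qed.

Lemma vec0 m n (v : 'rV[K]_(m * n)) : vec_mx v = 0 -> v = 0.
Proof. by move=> h; rewrite -[v]vec_mxK h linear0. Qed.

Lemma mxvec0 m n (F : 'M[K]_(m, n)) : mxvec F = 0 -> F = 0.
Proof. by move=> h; rewrite -[F]mxvecK h linear0. Qed.

Lemma dimHom_mono_r X1 X2 Y (f : 'M[K]_(mdim X1, mdim X2)) (g : 'M[K]_(mdim X2, mdim X1)) :
  is_hom f -> f *m g = 1%:M -> (dimHom Y X1 <= dimHom Y X2)%N.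
Proof.
move=> hf fg; apply: (@rank_inj _ _ _ _ _ _ (lin_mx (mulmxr f))) => v.
  by rewrite vecmul_r hom_spec hom_specV => hv; apply: is_homM.
rewrite vecmul_r => _ /mxvec0 h; apply: vec0.
by rewrite -[vec_mx v]mulmx1 -fg mulmxA h mul0mx.
Qed.

Lemma dimHom_mono_l X1 X2 Y (f : 'M[K]_(mdim X1, mdim X2)) (g : 'M[K]_(mdim X2, mdim X1)) :
  is_hom g -> f *m g = 1%:M -> (dimHom X1 Y <= dimHom X2 Y)%N.
Proof.
move=> hg fg; apply: (@rank_inj _ _ _ _ _ _ (lin_mx (mulmx g))) => v.
  by rewrite vecmul_l hom_spec hom_specV => hv; apply: is_homM.
rewrite vecmul_l => _ /mxvec0 h; apply: vec0.
by rewrite -[vec_mx v]mul1mx -fg -mulmxA h mulmx0.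
Qed.

Lemma dimHom_iso_r X X' Y : isomorphic X X' -> dimHom Y X = dimHom Y X'.
Proof.
case=> f [g [hf hg fg gf]]; apply/eqP; rewrite eqn_leq.
by rewrite (dimHom_mono_r _ hf fg) (dimHom_mono_r _ hg gf).
Qed.

Lemma dimHom_iso_l X X' Y : isomorphic X X' -> dimHom X Y = dimHom X' Y.
Proof.
case=> f [g [hf hg fg gf]]; apply/eqP; rewrite eqn_leq.
by rewrite (dimHom_mono_l _ hg fg) (dimHom_mono_l _ hf gf).
Qed.

Lemma block_sub m1 m2 a b (H1 : 'M[K]_(m1, a)) (H2 : 'M[K]_(m2, b)) (v : 'rV[K]_(a + b)) :
  (v <= block_mx H1 0 0 H2)%MS -> (lsubmx v <= H1)%MS /\ (rsubmx v <= H2)%MS.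
Proof.
case/submxP => x ->; rewrite -[x]hsubmxK mul_row_block !mulmx0 addr0 add0r.
by rewrite row_mxKl row_mxKr !submxMl.
Qed.

Lemma sub_block m1 m2 a b (H1 : 'M[K]_(m1, a)) (H2 : 'M[K]_(m2, b)) (u1 : 'rV[K]_a) (u2 : 'rV[K]_b) :
  (u1 <= H1)%MS -> (u2 <= H2)%MS -> (row_mx u1 u2 <= block_mx H1 0 0 H2)%MS.
Proof.
case/submxP => x1 -> /submxP [x2 ->]; apply/submxP; exists (row_mx x1 x2).
by rewrite mul_row_block !mulmx0 addr0 add0r.
Qed.

Lemma row_mx_eq0 m a b (u1 : 'M[K]_(m, a)) (u2 : 'M[K]_(m, b)) :
  row_mx u1 u2 = 0 -> u1 = 0 /\ u2 = 0.
Proof. by rewrite -row_mx0 => /eq_row_mx. Qed.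

Section Biprod.
Variables (Q X1 X2 : fdmod A).
Variables (i1 : 'M[K]_(mdim X1, mdim Q)) (p1 : 'M[K]_(mdim Q, mdim X1)).
Variables (i2 : 'M[K]_(mdim X2, mdim Q)) (p2 : 'M[K]_(mdim Q, mdim X2)).
Hypotheses (hi1 : is_hom i1) (hp1 : is_hom p1) (hi2 : is_hom i2) (hp2 : is_hom p2).
Hypotheses (e11 : i1 *m p1 = 1%:M) (e22 : i2 *m p2 = 1%:M) (e12 : i1 *m p2 = 0)
  (e21 : i2 *m p1 = 0) (esum : p1 *m i1 + p2 *m i2 = 1%:M).

Lemma biprod_r Y : dimHom Y Q = (dimHom Y X1 + dimHom Y X2)%N.
Proof.
apply/eqP; rewrite eqn_leq -[(dimHom Y X1 + _)%N]rank_diag_block_mx.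
apply/andP; split.
  apply: (@rank_inj _ _ _ _ _ _ (row_mx (lin_mx (mulmxr p1)) (lin_mx (mulmxr p2)))) => v.
    rewrite mul_mx_row !vecmul_r hom_specV => hv.
    by apply: sub_block; rewrite hom_spec; apply: is_homM.
  rewrite mul_mx_row !vecmul_r => _ /row_mx_eq0 [/mxvec0 h1 /mxvec0 h2].
  by apply: vec0; rewrite -[vec_mx v]mulmx1 -esum mulmxDr !mulmxA h1 h2 !mul0mx addr0.
apply: (@rank_inj _ _ _ _ _ _ (col_mx (lin_mx (mulmxr i1)) (lin_mx (mulmxr i2)))) => v.
  move/block_sub => [h1 h2]; rewrite -[v]hsubmxK mul_row_col !vecmul_r -linearD /= hom_spec.
  move: h1 h2; rewrite !hom_specV => h1 h2.
  by apply: is_homD; apply: is_homM.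
move/block_sub => [h1 h2]; rewrite -[v]hsubmxK mul_row_col !vecmul_r -linearD /= => /mxvec0 h.
have := congr1 (mulmxr p1) h; rewrite /= mulmxDl -!mulmxA e11 e21 mulmx1 mulmx0 addr0 mul0mx => /vec0 h1'.
have := congr1 (mulmxr p2) h; rewrite /= mulmxDl -!mulmxA e12 e22 mulmx1 mulmx0 add0r mul0mx => /vec0 h2'.
by rewrite h1' h2' row_mx0.
Qed.

Lemma biprod_l Y : dimHom Q Y = (dimHom X1 Y + dimHom X2 Y)%N.
Proof.
apply/eqP; rewrite eqn_leq -[(dimHom X1 Y + _)%N]rank_diag_block_mx.
apply/andP; split.
  apply: (@rank_inj _ _ _ _ _ _ (row_mx (lin_mx (mulmx i1)) (lin_mx (mulmx i2)))) => v.
    rewrite mul_mx_row !vecmul_l hom_specV => hv.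
    by apply: sub_block; rewrite hom_spec; apply: is_homM.
  rewrite mul_mx_row !vecmul_l => _ /row_mx_eq0 [/mxvec0 h1 /mxvec0 h2].
  by apply: vec0; rewrite -[vec_mx v]mul1mx -esum mulmxDl -!mulmxA h1 h2 !mulmx0 addr0.
apply: (@rank_inj _ _ _ _ _ _ (col_mx (lin_mx (mulmx p1)) (lin_mx (mulmx p2)))) => v.
  move/block_sub => [h1 h2]; rewrite -[v]hsubmxK mul_row_col !vecmul_l -linearD /= hom_spec.
  move: h1 h2; rewrite !hom_specV => h1 h2.
  by apply: is_homD; apply: is_homM.
move/block_sub => [h1 h2]; rewrite -[v]hsubmxK mul_row_col !vecmul_l -linearD /= => /mxvec0 h.
have := congr1 (mulmx i1) h; rewrite /= mulmxDr !mulmxA e11 e12 mul1mx mul0mx addr0 mulmx0 => /vec0 h1'.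
have := congr1 (mulmx i2) h; rewrite /= mulmxDr !mulmxA e21 e22 mul1mx mul0mx add0r mulmx0 => /vec0 h2'.
by rewrite h1' h2' row_mx0.
Qed.
End Biprod.

Lemma summand_proj Q X1 (i : 'M[K]_(mdim X1, mdim Q)) (p : 'M[K]_(mdim Q, mdim X1)) :
  is_hom i -> is_hom p -> i *m p = 1%:M -> projective Q -> projective X1.
Proof.
move=> hi hp e hQ X Y g f epi hf.
have [h0 [hh0 e0]] := hQ X Y g (p *m f) epi (is_homM hp hf).
exists (i *m h0); split; first exact: is_homM.
by rewrite -mulmxA e0 mulmxA e mul1mx.
Qed.

Section Split.
Variables (Q : fdmod A) (U V : 'M[K]_(mdim Q)) (hU : is_submod U) (hV : is_submod V).
Hypotheses (cap0 : (U :&: V = 0)%MS) (full : row_full (U + V)%MS).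

Lemma cap0' : (V :&: U = 0)%MS.
Proof. by rewrite capmxC. Qed.

Lemma proj_sum : proj_mx U V + proj_mx V U = 1%:M.
Proof.
have := add_proj_mx cap0 (_ : (1%:M <= U + V)%MS); rewrite !mul1mx; apply.
by rewrite sub1mx.
Qed.

Lemma proj_subU : (proj_mx U V <= U)%MS.
Proof. by rewrite -[proj_mx U V]mul1mx proj_mx_sub. Qed.

Lemma proj_comm a : mact Q a *m proj_mx U V = proj_mx U V *m mact Q a.
Proof.
rewrite -[mact Q a in LHS]mul1mx -proj_sum !mulmxDl.
rewrite (proj_mx_id cap0) ?(proj_mx_0 cap0) ?addr0 //.
  have sV : (proj_mx V U <= V)%MS by rewrite -[proj_mx V U]mul1mx proj_mx_sub.
  exact: submx_trans (submxMr _ sV) (hV a).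
exact: submx_trans (submxMr _ proj_subU) (hU a).
Qed.
End Split.

Lemma proj_hom Q (U V : 'M[K]_(mdim Q)) (hU : is_submod U) (hV : is_submod V) :
  (U :&: V = 0)%MS -> row_full (U + V)%MS ->
  @is_hom _ _ Q (submod hU) (proj_mx U V *m pinvmx (row_base U)).
Proof.
move=> c f; apply: hom_into; last exact: proj_subU.
by move=> a; apply: proj_comm.
Qed.

Lemma split_facts Q (U V : 'M[K]_(mdim Q)) (hU : is_submod U) (hV : is_submod V) :
  (U :&: V = 0)%MS -> row_full (U + V)%MS ->
  [/\ forall Y, dimHom Y Q = (dimHom Y (submod hU) + dimHom Y (submod hV))%N,
      forall Y, dimHom Q Y = (dimHom (submod hU) Y + dimHom (submod hV) Y)%N
    & projective Q -> projective (submod hU) /\ projective (submod hV)].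
Proof.
move=> c f.
have c' := cap0' c.
have f' : row_full (V + U)%MS by rewrite addsmxC.
have hi1 := hom_incl hU; have hi2 := hom_incl hV.
have hp1 := proj_hom hU hV c f; have hp2 := proj_hom hV hU c' f'.
have sBU : (row_base U <= U)%MS by rewrite eq_row_base.
have sBV : (row_base V <= V)%MS by rewrite eq_row_base.
have e11 : row_base U *m (proj_mx U V *m pinvmx (row_base U)) = 1%:M.
  by rewrite mulmxA (proj_mx_id c sBU) mulmxVp ?row_base_free.
have e22 : row_base V *m (proj_mx V U *m pinvmx (row_base V)) = 1%:M.
  by rewrite mulmxA (proj_mx_id c' sBV) mulmxVp ?row_base_free.
have e12 : row_base U *m (proj_mx V U *m pinvmx (row_base V)) = 0.
  by rewrite mulmxA (proj_mx_0 c' sBU) mul0mx.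
have e21 : row_base V *m (proj_mx U V *m pinvmx (row_base U)) = 0.
  by rewrite mulmxA (proj_mx_0 c sBV) mul0mx.
have es : (proj_mx U V *m pinvmx (row_base U)) *m row_base U +
          (proj_mx V U *m pinvmx (row_base V)) *m row_base V = 1%:M.
  rewrite !mulmxKpV ?eq_row_base ?proj_subU //; exact: proj_sum.
split.
- by move=> Y; apply: (biprod_r hi1 hp1 hi2 hp2).
- by move=> Y; apply: (biprod_l hi1 hp1 hi2 hp2).
move=> hQ; split; first exact: (summand_proj hi1 hp1 e11).
exact: (summand_proj hi2 hp2 e22).
Qed.

Definition mpow m (e : 'M[K]_m) j := iter j (mulmx e) 1%:M.

Lemma mpowS m (e : 'M[K]_m) j : mpow e j.+1 = e *m mpow e j.
Proof. by []. Qed.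

Lemma mpowSr m (e : 'M[K]_m) j : mpow e j.+1 = mpow e j *m e.
Proof.
elim: j => [|j IH]; first by rewrite /mpow /= mulmx1 mul1mx.
by rewrite [in LHS](mpowS e j.+1) [in LHS]IH mulmxA.
Qed.

Lemma mpowD m (e : 'M[K]_m) i j : mpow e (i + j) = mpow e i *m mpow e j.
Proof.
elim: i => [|i IH]; first by rewrite /mpow /= mul1mx.
by rewrite addSn !mpowS IH mulmxA.
Qed.

Lemma hom_mpow X (e : 'M[K]_(mdim X)) j : is_hom e -> is_hom (mpow e j).
Proof.
move=> he; elim: j => [|j IH]; first exact: is_hom1.
by rewrite mpowS; apply: is_homM.
Qed.

Lemma rk_dec m (e : 'M[K]_m) j : (\rank (mpow e j.+1) <= \rank (mpow e j))%N.
Proof. by rewrite mpowS mxrankM_maxr. Qed.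

Lemma rk_stab1 m (e : 'M[K]_m) j :
  \rank (mpow e j) = \rank (mpow e j.+1) -> \rank (mpow e j.+1) = \rank (mpow e j.+2).
Proof.
move=> h.
have s : (mpow e j.+1 <= mpow e j)%MS by rewrite mpowS submxMl.
have /eqmxP eq : (mpow e j.+1 == mpow e j)%MS.
  by rewrite -(mxrank_leqif_eq s) h.
have -> : mpow e j.+2 = mpow e j.+1 *m e by exact: mpowSr.
by rewrite (eqmxMr _ eq) -mpowSr.
Qed.

Lemma rk_stab m (e : 'M[K]_m) j k :
  \rank (mpow e j) = \rank (mpow e j.+1) -> \rank (mpow e (j + k)) = \rank (mpow e j).
Proof.
move=> h; elim: k => [|k IH]; first by rewrite addn0.
have h' : forall k, \rank (mpow e (j + k)) = \rank (mpow e (j + k).+1).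
  elim=> [|k' IH']; first by rewrite addn0.
  by rewrite addnS; apply: rk_stab1.
by rewrite addnS -IH -h'.
Qed.

Lemma rk_stable m (e : 'M[K]_m) : \rank (mpow e (m + m)) = \rank (mpow e m).
Proof.
apply: rk_stab.
apply/eqP; apply/negPn/negP => hne.
have H : forall j, (j <= m)%N -> \rank (mpow e j) != \rank (mpow e j.+1).
  move=> j hj; apply/negP => /eqP hj'.
  move: hne; have := rk_stab (m - j) hj'; rewrite subnKC //.
  have := rk_stab (m - j).+1 hj'; rewrite addnS subnKC // => -> -> ; by rewrite eqxx.
have H2 : forall j, (j <= m.+1)%N -> (\rank (mpow e j) + j <= m)%N.
  elim=> [|j IH] hj; first by rewrite addn0 /mpow /= mxrank1.
  have Hj := H j hj; have := rk_dec e j; rewrite leq_eqVlt => /orP [/eqP e1 | lt].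
    by rewrite e1 eqxx in Hj.
  rewrite addnS; apply: leq_trans (IH (ltnW hj)); by rewrite ltn_add2r.
by have := H2 m.+1 (leqnn _); rewrite addnS ltnNge leq_addl.
Qed.

Lemma fitting P (e : 'M[K]_(mdim P)) : indecomposable P -> is_hom e ->
  mpow e (mdim P) = 0 \/ e \in unitmx.
Proof.
move=> [m0 hind] he.
set m := mdim P in m0 hind e he *.
set E := mpow e m.
have hE : is_hom E by apply: hom_mpow.
have hU : is_submod (kermx E).
  move=> a; apply/sub_kermxP; by rewrite -mulmxA hE mulmxA mulmx_ker mul0mx.
have hV : is_submod E by move=> a; rewrite -hE submxMl.
have rEE : \rank (E *m E) = \rank E by rewrite -mpowD rk_stable.
have c : (E :&: kermx E = 0)%MS by apply/eqP/mxrank_injP.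
have c' : (kermx E :&: E = 0)%MS by rewrite capmxC.
have f : row_full (kermx E + E)%MS.
  rewrite /row_full mxrank_disjoint_sum // mxrank_ker subnK //; exact: rank_leq_row.
case: (hind _ _ hU hV f c') => [k0|E0]; last by left.
right; rewrite -row_free_unit /row_free.
have rE : \rank E = m.
  have := mxrank_ker E; rewrite k0 mxrank0 => /esym/eqP; rewrite subn_eq0 => h.
  by apply/eqP; rewrite eqn_leq h rank_leq_row.
have HE : E = mpow e m.-1 *m e by rewrite /E -mpowSr prednK.
by rewrite eqn_leq rank_leq_row -{1}rE HE mxrankM_maxr.
Qed.

Lemma epi_full X Y (f : 'M[K]_(mdim X, mdim Y)) : is_epi f -> row_full f.
Proof. by case=> _ h; rewrite /row_full h. Qed.

Lemma full_cancel m n p (f : 'M[K]_(m, n)) (x y : 'M[K]_(n, p)) :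
  row_full f -> f *m x = f *m y -> x = y.
Proof.
case/row_fullP => L hL e.
by rewrite -[x]mul1mx -hL -mulmxA e mulmxA hL mul1mx.
Qed.

Lemma factor P S1 S2 (f1 : 'M[K]_(mdim P, mdim S1)) (f2 : 'M[K]_(mdim P, mdim S2)) :
  is_epi f1 -> is_hom f2 -> (kermx f1 <= kermx f2)%MS ->
  f1 *m (pinvmx f1 *m f2) = f2 /\ is_hom (pinvmx f1 *m f2).
Proof.
move=> ep1 hf2 sk.
have e1 : (1%:M - f1 *m pinvmx f1) *m f2 = 0.
  apply/sub_kermxP; apply: submx_trans sk; apply/sub_kermxP.
  by rewrite mulmxBl mul1mx mulmxKpV ?subrr.
have ef : f1 *m (pinvmx f1 *m f2) = f2.
  by move/eqP: e1; rewrite mulmxBl mul1mx subr_eq0 mulmxA => /eqP <-.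
split => //; move: ef; move: (pinvmx f1 *m f2) => g ef a.
apply: (full_cancel (epi_full ep1)).
by rewrite mulmxA -(ep1.1 a) -mulmxA ef hf2 -ef -mulmxA.
Qed.

Lemma iso_of_ker P S1 S2 (f1 : 'M[K]_(mdim P, mdim S1)) (f2 : 'M[K]_(mdim P, mdim S2)) :
  is_epi f1 -> is_epi f2 -> (kermx f1 <= kermx f2)%MS -> (kermx f2 <= kermx f1)%MS ->
  isomorphic S1 S2.
Proof.
move=> ep1 ep2 s12 s21.
have [e1 h1] := factor ep1 ep2.1 s12.
have [e2 h2] := factor ep2 ep1.1 s21.
exists (pinvmx f1 *m f2), (pinvmx f2 *m f1); split => //.
  by apply: (full_cancel (epi_full ep1)); rewrite mulmxA e1 e2 mulmx1.
by apply: (full_cancel (epi_full ep2)); rewrite mulmxA e2 e1 mulmx1.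
Qed.

Lemma genmx_stable X Y (f : 'M[K]_(mdim X, mdim Y)) (U : 'M[K]_(mdim X)) :
  is_hom f -> is_submod U -> is_submod (<<U *m f>>%MS : 'M[K]_(mdim Y)).
Proof.
move=> hf hU a; rewrite (eqmxMr _ (genmxE _)) genmxE -mulmxA -hf mulmxA.
exact: submxMr (hU a).
Qed.

Lemma genmx_eq0' m n (B : 'M[K]_(m, n)) : <<B>>%MS = 0 -> B = 0.
Proof. by move=> h; apply/eqP; rewrite -mxrank_eq0 -mxrank_gen h mxrank0. Qed.

Lemma hom_nz_epi X S (f : 'M[K]_(mdim X, mdim S)) :
  simple_mod S -> is_hom f -> f != 0 -> is_epi f.
Proof.
move=> [_ hS] hf nz; split => //.
have := genmx_stable hf (fun a => submx1 (1%:M *m mact X a) : (1%:M *m mact X a <= 1%:M)%MS).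
rewrite mul1mx => hU; case: (hS _ hU) => [/genmx_eq0' h | h].
  by rewrite h eqxx in nz.
by move: h; rewrite /row_full mxrank_gen => /eqP.
Qed.

Lemma key P S1 S2 (f1 : 'M[K]_(mdim P, mdim S1)) (f2 : 'M[K]_(mdim P, mdim S2)) :
  projective P -> indecomposable P -> is_epi f1 -> is_epi f2 -> simple_mod S2 ->
  (0 < mdim S1)%N -> (kermx f1 <= kermx f2)%MS.
Proof.
move=> hP hind ep1 ep2 [s2pos hS2] s1pos.
have hM1 : is_submod (kermx f1).
  move=> a; apply/sub_kermxP; by rewrite -mulmxA ep1.1 mulmxA mulmx_ker mul0mx.
case: (hS2 _ (genmx_stable ep2.1 hM1)) => [/genmx_eq0' h | hfull].
  by apply/sub_kermxP.
exfalso.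
have hB := hom_incl hM1.
have hg := is_homM hB ep2.1.
have sg : (f2 <= row_base (kermx f1) *m f2)%MS.
  apply: submx_full; move: hfull; rewrite /row_full mxrank_gen.
  by rewrite (eqmxMr _ (eq_row_base _)).
have [h [hh hhg]] := lift_img hP hg ep2.1 sg.
set e := h *m row_base (kermx f1).
have he : is_hom e by apply: is_homM.
have ef : e *m f2 = f2 by rewrite -mulmxA.
have eM : (e <= kermx f1)%MS.
  by apply: submx_trans (submxMl h _) _; rewrite eq_row_base.
case: (fitting hind he) => [e0 | eu].
  have pf : forall j, mpow e j *m f2 = f2.
    elim=> [|j IH]; first by rewrite /mpow /= mul1mx.
    by rewrite mpowSr -mulmxA ef IH.
  move: ep2 => [_ r2]; move: (pf (mdim P)); rewrite e0 mul0mx => f20.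
  by move: r2 s2pos; rewrite -f20 mxrank0 => <-.
have rf : row_full (kermx f1).
  rewrite /row_full eqn_leq rank_leq_col.
  apply: (leq_trans _ (mxrankS eM)).
  by move: eu; rewrite -row_full_unit /row_full => /eqP ->.
move: rf; rewrite /row_full mxrank_ker ep1.2 => /eqP.
have := rank_leq_row f1; rewrite ep1.2 => hle.
move: hind => [m0 _]; lia.
Qed.

Lemma hom_PS_iso P S S' (pi : 'M[K]_(mdim P, mdim S)) (f : 'M[K]_(mdim P, mdim S')) :
  projective P -> indecomposable P -> simple_mod S -> simple_mod S' ->
  is_epi pi -> is_hom f -> f != 0 -> isomorphic S S'.
Proof.
move=> hP hi sS sS' ep hf nz.
have ef := hom_nz_epi sS' hf nz.
apply: (iso_of_ker ep ef); apply: key => //; [exact: sS.1 | exact: sS'.1].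
Qed.

Lemma dimHom_PS_diff P S S' (pi : 'M[K]_(mdim P, mdim S)) :
  projective P -> indecomposable P -> simple_mod S -> simple_mod S' ->
  is_epi pi -> ~ isomorphic S S' -> dimHom P S' = 0%N.
Proof.
move=> hP hi sS sS' ep niso; apply/eqP; rewrite mxrank_eq0; apply/rowV0P => v.
rewrite hom_specV => hv; apply: vec0.
case: (eqVneq (vec_mx v) 0) => // nz; exfalso; apply: niso.
exact: (hom_PS_iso hP hi sS sS' ep hv nz).
Qed.

Lemma dimHom_PS_same P S (pi : 'M[K]_(mdim P, mdim S)) :
  projective P -> indecomposable P -> simple_mod S -> is_epi pi ->
  dimHom P S = dimHom S S.
Proof.
move=> hP hi sS ep; apply/eqP; rewrite eqn_leq; apply/andP; split.
  apply: (@rank_inj _ _ _ _ _ _ (lin_mx (mulmx (pinvmx pi)))) => v; rewrite hom_specV => hv;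
    rewrite vecmul_l.
    case: (eqVneq (vec_mx v) 0) => [->|nz]; first by rewrite mulmx0 linear0 sub0mx.
    have ef := hom_nz_epi sS hv nz.
    have [_ h] := factor ep hv (key hP hi ep ef sS sS.1).
    by rewrite hom_spec.
  move/mxvec0 => h; apply: vec0.
  case: (eqVneq (vec_mx v) 0) => [//|nz].
  have ef := hom_nz_epi sS hv nz.
  have [e _] := factor ep hv (key hP hi ep ef sS sS.1).
  by rewrite -e h mulmx0.
apply: (@rank_inj _ _ _ _ _ _ (lin_mx (mulmx pi))) => v; rewrite hom_specV => hv;
  rewrite vecmul_l.
  by rewrite hom_spec; apply: is_homM => //; exact: ep.1.
move/mxvec0 => h; apply: vec0; apply: (full_cancel (epi_full ep)).
by rewrite h mulmx0.
Qed.

Lemma exact_rank P Y1 Y2 Y3 (g : 'M[K]_(mdim Y1, mdim Y2)) (d : 'M[K]_(mdim Y2, mdim Y3)) :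
  projective P -> is_hom g -> is_hom d -> g *m d = 0 -> (kermx d <= g)%MS ->
  \rank (homspace P Y2 :&: kermx (lin_mx (mulmxr d))) =
  \rank (homspace P Y1 *m lin_mx (mulmxr g)).
Proof.
move=> hP hg hd gd0 skg; apply/eqP; rewrite eqn_leq; apply/andP; split; apply: mxrankS; last first.
  apply/row_subP => i; rewrite row_mul.
  have : (row i (homspace P Y1) <= homspace P Y1)%MS by apply: row_sub.
  move: (row i _) => w; rewrite hom_specV => hw.
  rewrite vecmul_r sub_capmx; apply/andP; split; first by apply/hom_spec; exact: is_homM.
  by apply/sub_kermxP; rewrite mul_vec_lin /= -mulmxA gd0 mulmx0 linear0.
apply/rV_subP => v.
  rewrite sub_capmx => /andP [hv /sub_kermxP]; rewrite vecmul_r => /mxvec0 F0.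
  move: hv; rewrite hom_specV => hv.
  have sF : (vec_mx v <= g)%MS by apply: submx_trans skg; apply/sub_kermxP.
  have [h [hh hhg]] := lift_img hP hg hv sF.
  have -> : v = mxvec h *m lin_mx (mulmxr g) by rewrite mul_vec_lin /= hhg vec_mxK.
  apply: submxMr; by rewrite hom_spec.
Qed.

Lemma surj_rank P Y1 Y2 (g : 'M[K]_(mdim Y1, mdim Y2)) :
  projective P -> is_epi g ->
  \rank (homspace P Y1 *m lin_mx (mulmxr g)) = dimHom P Y2.
Proof.
move=> hP ep; apply/eqP; rewrite eqn_leq; apply/andP; split; apply: mxrankS.
  apply/row_subP => i; rewrite row_mul.
  have : (row i (homspace P Y1) <= homspace P Y1)%MS by apply: row_sub.
  move: (row i _) => w; rewrite hom_specV => hw.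
  by rewrite vecmul_r; apply/hom_spec; apply: is_homM => //; exact: ep.1.
apply/rV_subP => v; rewrite hom_specV => hv.
have sF : (vec_mx v <= g)%MS by apply: submx_full; exact: epi_full.
have [h [hh hhg]] := lift_img hP ep.1 hv sF.
have -> : v = mxvec h *m lin_mx (mulmxr g) by rewrite mul_vec_lin /= hhg vec_mxK.
apply: submxMr; by rewrite hom_spec.
Qed.

Lemma resA P X (R : projres X) : projective P ->
  ((dimHom P X)%:R : rat) = \sum_(n < (rlen R).+1) (-1)^+n * ((dimHom P (rmod R n))%:R : rat).
Proof.
move=> hP.
set I := fun n => \rank (homspace P (rmod R n.+1) *m lin_mx (mulmxr (rd R n))).
have A0 : dimHom P (rmod R 0) = (dimHom P X + I 0)%N.
  rewrite /dimHom -(mxrank_mul_ker (homspace P (rmod R 0)) (lin_mx (mulmxr (reps R)))).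
  rewrite surj_rank //; last exact: reps_epi.
  have /andP [s1 s2] := rexact0 R.
  rewrite (exact_rank hP (rd_hom R 0) (reps_epi R).1) //.
  by apply/sub_kermxP.
have An : forall n, dimHom P (rmod R n.+1) = (I n + I n.+1)%N.
  move=> n; rewrite /dimHom -(mxrank_mul_ker (homspace P (rmod R n.+1)) (lin_mx (mulmxr (rd R n)))).
  have /andP [s1 s2] := rexact R n.
  rewrite (exact_rank hP (rd_hom R n.+1) (rd_hom R n)) //.
  by apply/sub_kermxP.
have Aend : I (rlen R) = 0%N.
  apply/eqP; rewrite -leqn0; apply: leq_trans (rank_leq_row _) _.
  by rewrite (rbound (ltnSn (rlen R))) muln0.
have claim : forall k, \sum_(n < k.+1) (-1)^+n * ((dimHom P (rmod R n))%:R : rat) =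
    (dimHom P X)%:R + (-1)^+k * (I k)%:R.
  elim=> [|k IH]; first by rewrite big_ord_recr big_ord0 /= add0r A0 natrD expr0 !mul1r.
  rewrite big_ord_recr /= IH An natrD exprS; ring.
by rewrite claim Aend mulr0 addr0.
Qed.

Lemma euler_alt X Y (R : projres X) :
  euler Y R = \sum_(n < (rlen R).+1) (-1)^+n * ((dimHom (rmod R n) Y)%:R : rat).
Proof.
have sp : forall n, dimHom (rmod R n) Y = (ext_im_rank Y R n + ext_ker_rank Y R n)%N.
  by move=> n; rewrite /dimHom /ext_im_rank /ext_ker_rank mxrank_mul_ker.
have dd0 : forall n, rd R n.+1 *m rd R n = 0.
  by move=> n; have /andP [_ s] := rexact R n; apply/sub_kermxP.
have le : forall n, (ext_im_rank Y R n <= ext_ker_rank Y R n.+1)%N.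
  move=> n; apply: mxrankS; apply/row_subP => i; rewrite row_mul.
  have : (row i (homspace (rmod R n) Y) <= homspace (rmod R n) Y)%MS by apply: row_sub.
  move: (row i _) => w; rewrite hom_specV => hw.
  rewrite vecmul_l sub_capmx; apply/andP; split; first by apply/hom_spec; apply: is_homM => //; exact: rd_hom.
  by apply/sub_kermxP; rewrite mul_vec_lin /= mulmxA dd0 mul0mx linear0.
have Eend : ext_im_rank Y R (rlen R) = 0%N.
  apply/eqP; rewrite -leqn0; apply: leq_trans (rank_leq_col _) _.
  by rewrite (rbound (ltnSn (rlen R))) mul0n.
have claim : forall k, \sum_(n < k.+1) (-1)^+n * ((dimExt Y R n)%:R : rat) =
    \sum_(n < k.+1) (-1)^+n * ((dimHom (rmod R n) Y)%:R : rat) - (-1)^+k * (ext_im_rank Y R k)%:R.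
  elim=> [|k IH].
    rewrite !big_ord_recr !big_ord0 /= !add0r /dimExt subn0 sp natrD expr0 !mul1r; ring.
  rewrite big_ord_recr /= IH [in RHS]big_ord_recr /= /dimExt natrB ?le // sp natrD exprS; ring.
by rewrite /euler claim Eend mulr0 subr0.
Qed.

Section Decomp.
Variables (n : nat) (P S : 'I_n -> fdmod A).
Unset Implicit Arguments.
Hypotheses (HPproj : forall i, projective (P i)) (HPind : forall i, indecomposable (P i))
  (HPall : forall X : fdmod A, projective X -> indecomposable X -> exists i, isomorphic X (P i))
  (HSsimp : forall i, simple_mod (S i))
  (HSdist : forall i j, isomorphic (S i) (S j) -> i = j)
  (HPS : forall i, exists f : 'M[K]_(mdim (P i), mdim (S i)), is_epi f).
Set Implicit Arguments.

Definition dd i : rat := (dimHom (S i) (S i))%:R.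

Lemma dd_neq0 i : dd i != 0.
Proof.
rewrite /dd pnatr_eq0 -lt0n.
have h1 : (mxvec (1%:M : 'M[K]_(mdim (S i))) <= homspace (S i) (S i))%MS.
  by apply/hom_spec; exact: is_hom1.
apply: leq_trans (mxrankS h1); rewrite rank_rV lt0b mxvec_eq0.
have [s0 _] := HSsimp i.
apply/eqP => /matrixP /(_ (Ordinal s0) (Ordinal s0)); rewrite !mxE eqxx /=.
by move/eqP; rewrite oner_eq0.
Qed.

Lemma PS_dim l k : dimHom (P l) (S k) = if l == k then dimHom (S k) (S k) else 0%N.
Proof.
have [pi ep] := HPS l.
case: eqP => [<-|ne] /=; first exact: (dimHom_PS_same (HPproj l) (HPind l) (HSsimp l) ep).
apply: (dimHom_PS_diff (HPproj l) (HPind l) (HSsimp l) (HSsimp k) ep).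
by move/HSdist.
Qed.

Lemma dim0_r X Y : mdim X = 0%N -> dimHom Y X = 0%N.
Proof.
move=> h; apply/eqP; rewrite -leqn0; apply: leq_trans (rank_leq_col _) _.
by rewrite h muln0.
Qed.

Lemma dim0_l X Y : mdim X = 0%N -> dimHom X Y = 0%N.
Proof.
move=> h; apply/eqP; rewrite -leqn0; apply: leq_trans (rank_leq_col _) _.
by rewrite h mul0n.
Qed.

Lemma decompC_aux N : forall Q, (mdim Q < N)%N -> projective Q -> forall Y,
  ((dimHom Y Q)%:R : rat) = \sum_l ((dimHom Q (S l))%:R / dd l) * (dimHom Y (P l))%:R.
Proof.
elim: N => // N IH Q hQN hQ Y.
case: (classic (indecomposable Q)) => hind.
  have [i iso] := HPall _ hQ hind.
  rewrite (dimHom_iso_r _ iso) (bigD1 i) //= big1 ?addr0.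
    by rewrite (dimHom_iso_l _ iso) PS_dim eqxx divff ?dd_neq0 // mul1r.
  by move=> l nil; rewrite (dimHom_iso_l _ iso) PS_dim eq_sym (negbTE nil) mul0r mul0r.
case: (eqVneq (mdim Q) 0%N) => [m0|mn0].
  rewrite dim0_r // big1 // => l _; by rewrite dim0_l // mul0r mul0r.
have : ~ (forall U V : 'M[K]_(mdim Q), is_submod U -> is_submod V ->
    row_full (U + V)%MS -> (U :&: V)%MS = 0 -> U = 0 \/ V = 0).
  by move=> h; apply: hind; split => //; rewrite lt0n.
move=> /not_all_ex_not [U /not_all_ex_not [V]].
move=> h0; have [hU h1] := imply_to_and _ _ h0; have [hV h2] := imply_to_and _ _ h1.
have [f h3] := imply_to_and _ _ h2; have [c nUV] := imply_to_and _ _ h3.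
have nU : U != 0 by apply/eqP => h; apply: nUV; left.
have nV : V != 0 by apply/eqP => h; apply: nUV; right.
have [eR eL pj] := split_facts hU hV c f.
have [p1 p2] := pj hQ.
have rs : (\rank U + \rank V)%N = mdim Q.
  by rewrite -mxrank_disjoint_sum //; apply/eqP.
have rU : (0 < \rank U)%N by rewrite lt0n mxrank_eq0.
have rV : (0 < \rank V)%N by rewrite lt0n mxrank_eq0.
have l1 : (mdim (submod hU) < N)%N by rewrite /=; lia.
have l2 : (mdim (submod hV) < N)%N by rewrite /=; lia.
rewrite eR natrD (IH _ l1 p1) (IH _ l2 p2) -big_split /=.
apply: eq_bigr => l _; rewrite eL natrD; ring.
Qed.

End Decomp.

End Mod.

Theorem mainTheorem2 (K : fieldType) (A : falgType K) (gldim : fin_gldim A)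
  (n : nat) (P S : 'I_n -> fdmod A)
  (HPproj : forall i, projective (P i))
  (HPind : forall i, indecomposable (P i))
  (HPdist : forall i j, isomorphic (P i) (P j) -> i = j)
  (HPall : forall X : fdmod A, projective X -> indecomposable X ->
             exists i, isomorphic X (P i))
  (HSsimp : forall i, simple_mod (S i))
  (HSdist : forall i j, isomorphic (S i) (S j) -> i = j)
  (HSall : forall X : fdmod A, simple_mod X -> exists i, isomorphic X (S i))
  (HPS : forall i, exists f : 'M[K]_(mdim (P i), mdim (S i)), is_epi f)
  (R : forall j, projres (S j)) :
  let Z : 'M[rat]_n := \matrix_(i, j) (dimHom (P i) (P j))%:R in
  let d (i : 'I_n) : rat := (dimHom (S i) (S i))%:R in
  [/\ Z \in unitmx,
      forall i j, invmx Z i j = (d i)^-1 * euler (S i) (R j) * (d j)^-1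
    & magnitude Z = \sum_(i < n) \sum_(j < n) (d i)^-1 * (d j)^-1 * euler (S i) (R j)].
Proof.
move=> Z d.
have dE : forall i, dd S i = d i by [].
have dn0 : forall i, d i != 0 by move=> i; rewrite -dE; apply: dd_neq0.
have DC := decompC_aux HPproj HPind HPall HSsimp HSdist HPS.
pose X : 'M[rat]_n := \matrix_(i, j) ((d i)^-1 * euler (S i) (R j) * (d j)^-1).
have ZX : Z *m X = 1%:M.
  apply/matrixP => k j; rewrite !mxE.
  have step : forall i, Z k i * X i j = \sum_(m < (rlen (R j)).+1) (d j)^-1 *
      ((-1)^+m * ((dimHom (rmod (R j) m) (S i))%:R / dd S i * (dimHom (P k) (P i))%:R)).
    move=> i; rewrite !mxE euler_alt mulr_sumr mulr_suml mulr_sumr.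
    apply: eq_bigr => m _; rewrite dE; ring.
  rewrite (eq_bigr _ (fun i _ => step i)) exchange_big /=.
  have step2 : forall m : 'I_(rlen (R j)).+1, \sum_i (d j)^-1 *
      ((-1)^+m * ((dimHom (rmod (R j) m) (S i))%:R / dd S i * (dimHom (P k) (P i))%:R)) =
      (d j)^-1 * ((-1)^+m * (dimHom (P k) (rmod (R j) m))%:R).
    move=> m; rewrite -mulr_sumr -mulr_sumr.
    by rewrite -(DC _ _ (ltnSn _) (@rproj K A (S j) (R j) m) (P k)).
  rewrite (eq_bigr _ (fun m _ => step2 m)) -mulr_sumr -(resA (R j) (HPproj k)).
  rewrite (PS_dim HPproj HPind HSsimp HSdist HPS) -/(d j).
  case: eqP => [_|_]; first by rewrite mulVf.
  by rewrite mulr0.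
have [Zu _] := mulmx1_unit ZX.
have iZ : invmx Z = X by rewrite -[X]mul1mx -(mulVmx Zu) -mulmxA ZX mulmx1.
split => //.
  by move=> i j; rewrite iZ mxE.
rewrite /magnitude; apply: eq_bigr => i _; apply: eq_bigr => j _.
by rewrite iZ mxE mulrAC.
Qed.
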